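(* Run MUDAN on a reported profile $\theta'$ with nonempty final winner set $W$, and let $w^*$ be the last buyer added to $W$. If a buyer $y$ has reported valuation strictly larger than the reported valuation of every winner, i.e. $v'_y>v'_w$ for all $w\in W$, then $w^*$ is critical for $y$: every directed path from $s$ to $y$ in $G_{\theta'}$ passes through $w^*$. In particular, under truthful reporting ($\theta'=\theta$), such a $y$ does not belong to $B^*$, the set of buyers for which $w^*$ is not critical.
   Context: Single-demand model. A seller $s$ has $m\ge 1$ identical items. Buyers $B=\{1,\dots,n\}$; buyer $i$ has a true valuation $v_i\in\mathbb{R}_{\ge0}$ and true neighbour set $r_i\subseteq B$; the seller has a fixed neighbour set $r_s\subseteq B$. Buyer $i$ reports $(v'_i,r'_i)$ with $v'_i\ge 0$, $r'_i\subseteq r_i$; the truthful profile is $\theta$. The profile graph $G_{\theta'}$ is the directed graph on $\{s\}\cup B$ with an edge $(x,y)$ iff $y\in r'_x$ (for $x=s$ use $r_s$). A buyer $w$ is critical for a buyer $i$ if every directed path from $s$ to $i$ in $G_{\theta'}$ passes through $w$. Priority rule: each buyer $i$ is given a priority $\sigma_i$ that is a function of its reported neighbour set $r'_i$ only (e.g. $\sigma_i=|r'_i|$), independent of all reported valuations and non-decreasing with respect to inclusion of $r'_i$; ties are broken by a fixed total order on buyers. MUDAN, run on a reported profile $\theta'$. It maintains an explored set $A\subseteq B$, a winner set $W\subseteq A$, remaining supply $m'=m-|W|$, and tentative payments. For current $A,W$ the potential-winner set $P(A,W)$ is: $P=A$ if $|A\setminus W|\le m'$; otherwise $P=W\cup\{$the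 $m'$ buyers of $A\setminus W$ with highest reported valuations$\}$ (ties broken by a fixed total order). Buyers in $A\setminus P$ are called exhausted. Initialise $A=r_s$, $W=\varnothing$, and repeat: (1) Closure: while some buyer $x\in W\cup(A\setminus P(A,W))$ (with $P$ recomputed from the current $A,W$) has $r'_x\not\subseteq A$, set $A\leftarrow A\cup r'_x$. (2) Let $P=P(A,W)$; if $P\setminus W=\varnothing$, stop. (3) Let $w$ be the buyer of $P\setminus W$ with highest priority; set its tentative payment $\hat p_w$ to the $(m'+1)$-th highest reported valuation in $A\setminus W$ (current $m'$, before adding $w$), or $0$ if $|A\setminus W|\le m'$; add $w$ to $W$. Output: every $w\in W$ gets an item and pays $\hat p_w$; other buyers get nothing and pay $0$. *)

(* Defs.v *)
(* Model of MUDAN (single-demand, m identical items). *)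
From mathcomp Require Import all_boot all_order all_algebra.
Set Implicit Arguments. Unset Strict Implicit. Unset Printing Implicit Defensive.
Import Order.TTheory GRing.Theory Num.Theory.
Local Open Scope ring_scope.

Section Mudan.
Variables (R : realDomainType) (n : nat).
Notation B := 'I_n.

(* ---------- profile graph G_theta' on nodes {s} u B  (s = None) ---------- *)
Definition edge (rs : {set B}) (r : B -> {set B}) : rel (option B) :=
  fun x y => match x, y with
             | None, Some b => b \in rs
             | Some a, Some b => b \in r a
             | _, _ => false
             end.

Definition critical (rs : {set B}) (r : B -> {set B}) (w y : B) : Prop :=
  forall p : seq (option B),
    path (edge rs r) None p -> last None p = Some y -> Some w \in p.

Definition Bstar (rs : {set B}) (r : B -> {set B}) (w : B) : B -> Prop :=
  fun y => ~ critical rs r w y.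

Definition beats (v : B -> R) (tbv : B -> nat) (x z : B) : bool :=
  (v z < v x) || ((v x == v z) && (tbv x < tbv z))%N.

Definition topk (v : B -> R) (tbv : B -> nat) (k : nat) (S : {set B}) : {set B} :=
  [set x in S | #|[set z in S | beats v tbv z x]| < k]%N.

Definition winset (Ws : seq B) : {set B} := [set x in Ws].

Definition potential (m : nat) (v : B -> R) (tbv : B -> nat)
    (A : {set B}) (Ws : seq B) : {set B} :=
  let W := winset Ws in
  let m' := (m - size Ws)%N in
  if (#|A :\: W| <= m')%N then A else W :|: topk v tbv m' (A :\: W).

Definition closed (m : nat) (v : B -> R) (tbv : B -> nat) (r : B -> {set B})
    (A : {set B}) (Ws : seq B) : Prop :=
  forall x, x \in winset Ws :|: (A :\: potential m v tbv A Ws) -> r x \subset A.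

Definition max_priority (sigma : {set B} -> R) (r : B -> {set B})
    (tbp : B -> nat) (S : {set B}) (w : B) : Prop :=
  w \in S /\
  forall z, z \in S -> z != w ->
    (sigma (r z) < sigma (r w)) ||
    ((sigma (r z) == sigma (r w)) && (tbp w < tbp z)%N).

(* one step of MUDAN on states (A, W) ; W is kept as the sequence of winners
   in order of addition (payments are irrelevant here and are not tracked) *)
Inductive mstep (m : nat) (v : B -> R) (r : B -> {set B})
    (sigma : {set B} -> R) (tbv tbp : B -> nat) :
    {set B} * seq B -> {set B} * seq B -> Prop :=
| closure_step A Ws x :
    x \in winset Ws :|: (A :\: potential m v tbv A Ws) ->
    ~~ (r x \subset A) ->
    mstep m v r sigma tbv tbp (A, Ws) (A :|: r x, Ws)
| select_step A Ws w :
    closed m v tbv r A Ws ->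
    max_priority sigma r tbp (potential m v tbv A Ws :\: winset Ws) w ->
    mstep m v r sigma tbv tbp (A, Ws) (A, rcons Ws w).

Inductive reach (m : nat) (v : B -> R) (r : B -> {set B})
    (sigma : {set B} -> R) (tbv tbp : B -> nat) :
    {set B} * seq B -> {set B} * seq B -> Prop :=
| reach_refl st : reach m v r sigma tbv tbp st st
| reach_step st1 st2 st3 :
    mstep m v r sigma tbv tbp st1 st2 -> reach m v r sigma tbv tbp st2 st3 ->
    reach m v r sigma tbv tbp st1 st3.

Definition mudan_run (m : nat) (rs : {set B}) (v : B -> R) (r : B -> {set B})
    (sigma : {set B} -> R) (tbv tbp : B -> nat) (A : {set B}) (Ws : seq B) : Prop :=
  reach m v r sigma tbv tbp (rs, [::]) (A, Ws) /\
  closed m v tbv r A Ws /\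
  potential m v tbv A Ws :\: winset Ws = set0.

End Mudan.

(* Main.v *)
Require Import Defs.
From mathcomp Require Import all_boot all_order all_algebra.
From mathcomp Require Import zify.
Import Order.TTheory GRing.Theory Num.Theory.
Local Open Scope ring_scope.
Set Implicit Arguments. Unset Strict Implicit.

Section Helpers.
Variables (R : realDomainType) (n m : nat) (v : 'I_n -> R) (r : 'I_n -> {set 'I_n})
  (sigma : {set 'I_n} -> R) (tbv tbp : 'I_n -> nat).
Hypothesis tbvI : injective tbv.

Lemma reach_mono st1 st2 : reach m v r sigma tbv tbp st1 st2 ->
  st1.1 \subset st2.1 /\ exists t, st2.2 = st1.2 ++ t.
Proof.
elim=> [st|s1 s2 s3 hs _ [IHA [t IHt]]]; first by split=> //; exists [::]; rewrite cats0.
case: hs IHA IHt => [A Ws x _ _ | A Ws w _ _] /= IHA IHt.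
- split; first exact: subset_trans (subsetUl _ _) IHA. by exists t.
- split=> //. exists (w :: t). by rewrite IHt cat_rcons.
Qed.

Lemma reach_split st1 st3 : reach m v r sigma tbv tbp st1 st3 -> forall W0 w,
  st3.2 = rcons W0 w -> (exists s, W0 = st1.2 ++ s) ->
  exists A1, [/\ reach m v r sigma tbv tbp st1 (A1, W0), Defs.closed m v tbv r A1 W0,
    max_priority sigma r tbp (potential m v tbv A1 W0 :\: winset W0) w &
    reach m v r sigma tbv tbp (A1, rcons W0 w) st3].
Proof.
elim=> [st|s1 s2 s3 hs h23 IH] W0 w.
  move=> -> [s] /(congr1 size). rewrite size_cat size_rcons. lia.
move=> E3 [s Es]. case: hs h23 IH Es => [A Ws x hx hn | A Ws w' hcl hmp] h23 IH /= Es.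
  have [A1 [h1 h2 h3 h4]] := IH W0 w E3 (ex_intro _ s Es).
  exists A1; split=> //. apply: reach_step h1. exact: closure_step.
have [_ [t Et]] := reach_mono h23. rewrite E3 /= in Et.
case: s Es => [|a s] Es.
  rewrite cats0 in Es; subst W0.
  move: Et; rewrite cat_rcons -cats1 => /(congr1 (drop (size Ws))).
  rewrite !drop_size_cat // => -[Ew _]; subst w'.
  exists A; split=> //; [exact: reach_refl | by rewrite cats1].
rewrite Es rcons_cat cat_rcons in Et; move/(congr1 (drop (size Ws))): Et.
rewrite !drop_size_cat // => -[Ea _]; subst a.
have [A1 [h1 h2 h3 h4]] := IH W0 w E3 (ex_intro _ s (etrans Es (esym (cat_rcons _ _ _)))).
exists A1; split=> //. apply: reach_step h1. exact: select_step.
Qed.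

Lemma beats_irr x : ~~ beats v tbv x x.
Proof. by rewrite /beats ltxx ltnn andbF. Qed.

Lemma beats_trans a b c : beats v tbv a b -> beats v tbv b c -> beats v tbv a c.
Proof.
rewrite /beats => /orP[hab|/andP[/eqP eab tab]] /orP[hbc|/andP[/eqP ebc tbc]]; apply/orP.
- left; exact: lt_trans hbc hab.
- left; by rewrite -ebc.
- left; by rewrite eab.
- right; rewrite eab ebc eqxx /=; exact: ltn_trans tab tbc.
Qed.

Lemma beats_total a b : a != b -> beats v tbv a b || beats v tbv b a.
Proof.
move=> hab; rewrite /beats.
case: (ltgtP (v a) (v b)) => [h|h|h] /=; rewrite ?orbT //.
have : tbv a != tbv b by apply: contra hab => /eqP /tbvI ->.
by rewrite neq_ltn => /orP[->|->]; rewrite ?orbT.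
Qed.

Lemma topk_nonempty k (S : {set 'I_n}) z : (0 < k)%N -> z \in S -> exists x, x \in topk v tbv k S.
Proof.
move=> k0 zS.
have [x xS xmin] := arg_minnP (fun i => #|[set u in S | beats v tbv u i]|) zS.
exists x; rewrite inE; apply/andP; split=> //.
suff -> : [set u in S | beats v tbv u x] = set0 by rewrite cards0.
apply/eqP; rewrite -subset0; apply/subsetP => u; rewrite inE => /andP[uS bux].
have := xmin u uS; rewrite leqNgt => /negP; case.
apply: proper_card; apply/properP; split.
  apply/subsetP=> t; rewrite !inE => /andP[tS btu]; rewrite tS /=; exact: beats_trans btu bux.
exists u; first by rewrite inE uS bux.
by rewrite inE (negbTE (beats_irr u)) andbF.
Qed.

Lemma pot_sub A W x : x \in potential m v tbv A W :\: winset W -> x \in A :\: winset W.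
Proof.
rewrite /potential; case: ifP => // _.
rewrite in_setD in_setU => /andP[xW /orP[xW'|]]; first by rewrite xW' in xW.
by rewrite inE => /andP[].
Qed.

Lemma pot_pos A W x : x \in potential m v tbv A W :\: winset W -> (0 < m - size W)%N.
Proof.
move=> hx; have xA := pot_sub hx; move: hx.
rewrite /potential; case: ifP => [hc _|_].
  have : (0 < #|A :\: winset W|)%N by apply/card_gt0P; exists x.
  move=> h; exact: leq_trans h hc.
rewrite in_setD in_setU => /andP[xW /orP[xW'|]]; first by rewrite xW' in xW.
by rewrite inE => /andP[_ h]; exact: leq_ltn_trans (leq0n _) h.
Qed.

Lemma final_exh A W z : potential m v tbv A W :\: winset W = set0 ->
  z \in A :\: winset W -> (m - size W = 0)%N.
Proof.
move=> hP hz. case: (posnP (m - size W)) => // hpos.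
move: hP; rewrite /potential; case: ifP => [_ E|_].
  by move: hz; rewrite E inE.
have [x xt] := topk_nonempty hpos hz.
move/setP/(_ x). rewrite in_setD in_setU xt orbT andbT inE.
have : x \in A :\: winset W by move: xt; rewrite inE => /andP[].
by rewrite !inE => /andP[-> _].
Qed.

Lemma pot1 A W x : (m - size W = 1)%N -> (1 < #|A :\: winset W|)%N ->
  x \in potential m v tbv A W :\: winset W -> x \in topk v tbv 1 (A :\: winset W).
Proof.
move=> hm hc. rewrite /potential hm leqNgt hc /=.
by rewrite in_setD in_setU => /andP[/negbTE -> /=].
Qed.

Lemma topk1_top (S : {set 'I_n}) x u : x \in topk v tbv 1 S -> u \in S -> ~~ beats v tbv u x.
Proof.
rewrite inE => /andP[_]; rewrite ltnS leqn0 cards_eq0 => /eqP X0 uS; apply/negP=> bux.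
have : u \in [set t in S | beats v tbv t x] by rewrite inE uS bux.
by rewrite X0 inE.
Qed.

End Helpers.

Lemma path_exit n (rs : {set 'I_n}) (r : 'I_n -> {set 'I_n}) (A1 : {set 'I_n}) (wstar y : 'I_n)
  (p : seq (option 'I_n)) (x0 : option 'I_n) :
  rs \subset A1 -> path (edge rs r) x0 p -> Some wstar \notin p ->
  (match x0 with None => true | Some a => (a \in A1) && (a != wstar) end) ->
  last x0 p = Some y ->
  (y \in A1) \/ exists2 a, a \in A1 & (a != wstar) && ~~ (r a \subset A1).
Proof.
move=> rsA. elim: p x0 => [|b p IH] x0 /=.
  move=> _ _ hx0 E; subst x0; left; by case/andP: hx0.
move=> /andP[hb hp]. rewrite in_cons negb_or => /andP[hbw hpw] hx0 hl.
case: b hb hbw hp hl => [b|] hb hbw hp hl; last by case: x0 hb hx0.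
have bw : b != wstar by apply: contra hbw => /eqP ->.
case bA: (b \in A1).
  by apply: (IH (Some b)) => //=; rewrite bA bw.
case: x0 hb hx0 => [a|] /= hb hx0.
  right; exists a; first by case/andP: hx0.
  rewrite (andP hx0).2 /=. apply/negP => /subsetP /(_ b hb); by rewrite bA.
by rewrite (subsetP rsA b hb) in bA.
Qed.

Theorem lemma4 (R : realDomainType) (n m : nat) (rs : {set 'I_n})
    (vt : 'I_n -> R) (rt : 'I_n -> {set 'I_n})
    (v : 'I_n -> R) (r : 'I_n -> {set 'I_n})
    (sigma : {set 'I_n} -> R) (tbv tbp : 'I_n -> nat)
    (A : {set 'I_n}) (Ws W0 : seq 'I_n) (wstar y : 'I_n) :
  (0 < m)%N ->
  (forall i, 0 <= vt i) ->
  (forall i, 0 <= v i) ->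
  (forall i, r i \subset rt i) ->
  injective tbv -> injective tbp ->
  (forall S T : {set 'I_n}, S \subset T -> sigma S <= sigma T) ->
  mudan_run m rs v r sigma tbv tbp A Ws ->
  Ws = rcons W0 wstar ->
  (forall w, w \in Ws -> v w < v y) ->
  critical rs r wstar y /\
  (v = vt -> r = rt -> ~ Bstar rs rt wstar y).
Proof.
move=> m0 _ _ _ tbvI _ _ [hreach [hclf hPf]] EWs hy.
have hcrit : critical rs r wstar y.
  move=> p hp hl; apply/negPn/negP => hw.
  have [A1 [h1 hcl1 hmp h2]] := reach_split hreach EWs (ex_intro _ W0 (erefl _)).
  have [rsA1 _] := reach_mono h1.
  have [A1f _] := reach_mono h2.
  have wP := hmp.1.
  have wS := pot_sub wP.
  have mpos := pot_pos wP.
  have inWs z : (z \in winset Ws) = (z == wstar) || (z \in winset W0).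
    by rewrite !inE EWs mem_rcons in_cons.
  have hm1 z : z \in A1 -> z \notin winset W0 -> z != wstar ->
      ((m - size W0 = 1)%N /\ (1 < #|A1 :\: winset W0|)%N).
    move=> zA zW zw.
    have zf : z \in A :\: winset Ws.
      by rewrite in_setD inWs negb_or zw zW (subsetP A1f z zA).
    have := final_exh hPf zf; rewrite EWs size_rcons => h0.
    split; first lia.
    have : (#|[set z; wstar]| <= #|A1 :\: winset W0|)%N .
      apply: subset_leq_card; apply/subsetP => t /set2P [] ->.
        by rewrite in_setD zA zW.
      exact: wS.
    by rewrite cards2 zw.
  have yw : y != wstar.
    apply/eqP => E; have := hy wstar; rewrite EWs mem_rcons in_cons eqxx => /(_ isT).
    by rewrite E ltxx.
  have yW0 : y \notin winset W0.
    rewrite inE; apply/negP => yW; have := hy y; rewrite EWs mem_rcons in_cons yW orbT.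
    by move=> /(_ isT); rewrite ltxx.
  have := path_exit rsA1 hp hw isT hl; case=> [yA|[a aA /andP[aw ra]]].
    have [hm hc] := hm1 y yA yW0 yw.
    have wt := pot1 hm hc wP.
    have ySd : y \in A1 :\: winset W0 by rewrite in_setD yW0 yA.
    have := topk1_top wt ySd; rewrite /beats.
    have -> : v wstar < v y by apply: hy; rewrite EWs mem_rcons mem_head.
    by [].
  have aP : a \in potential m v tbv A1 W0 :\: winset W0.
    have : a \notin winset W0 :|: (A1 :\: potential m v tbv A1 W0).
      by apply: contra ra; apply: hcl1.
    by rewrite in_setU in_setD negb_or aA andbT negbK in_setD => /andP[-> ->].
  have aW0 : a \notin winset W0 by move: aP; rewrite in_setD => /andP[].
  have [hm hc] := hm1 a aA aW0 aw.
  have at1 := pot1 hm hc aP.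
  have wt := pot1 hm hc wP.
  have aS : a \in A1 :\: winset W0 by rewrite in_setD aW0 aA.
  have := topk1_top wt aS; have := topk1_top at1 wS.
  by case/orP: (beats_total v tbvI aw) => ->.
split=> //. move=> _ er hb. rewrite /Bstar -er in hb. exact: hb hcrit.
Qed.
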